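(* Let $G$ be a 1-player timed region graph in which every region of $\mathcal R_{\mathrm{Min}}$ is choiceless. Let $\chi\in\Delta_{\mathrm{Max}}$ be regionally constant (so $G\upharpoonright\chi$ is 0-player) and let $(T^\chi,D^\chi)\models\mathrm{Opt}(G\upharpoonright\chi)$. If $\mathrm{Improve}_{\mathrm{Max}}(\chi,(T^\chi,D^\chi))=\chi$, then $(T^\chi,D^\chi)\models\mathrm{Opt}_{\mathrm{Max}}(G)$.
   Context: Fix $k\in\mathbb N$. Let $C$ be a finite set of clocks. A clock valuation is a function $\nu:C\to[0,k]$; $V$ is the set of clock valuations. For $t\ge 0$ let $(\nu+t)(c)=\nu(c)+t$; for $C'\subseteq C$ let $\mathrm{Reset}(\nu,C')(c)=0$ if $c\in C'$ and $=\nu(c)$ otherwise. Simple clock constraints are $c\bowtie i$ or $c-c'\bowtie i$ with $c,c'\in C$, $i\in\{0,\dots,k\}$, ${\bowtie}\in\{<,>,=,\le,\ge\}$. A clock region is an equivalence class of $V$ under ''satisfies the same simple clock constraints''; a clock zone is a convex union of clock regions. For a finite set $L$ of locations, a configuration is $s=(\ell,\nu)\in Q=L\times V$; write $s(c)=\nu(c)$ and $s+t=(\ell,\nu+t)$ (defined if $\nu+t\in V$). A region is $(\ell,P)$ (identified with $\{(\ell,\nu):\nu\in P\}$) for a clock region $P$; $[s]$ is the region containing $s$, $\mathcal R$ the set of regions, $\overline R$ the topological closure of $R$. A zone is a set $\{(\ell,\nu):\nu\in W_\ell\}$ with each $W_\ell$ a clock zone. A timed automaton $\mathcal T=(L,C,S,A,E,\delta,\rho,F)$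 consists of finite $L$, finite $C$, a zone $S\subseteq Q$ of states, a finite set $A$ of actions, $E:A\to 2^S$ with every $E(a)$ a zone, $\delta:L\times A\to L$, $\rho:A\to 2^C$, and a zone $F\subseteq S$ of final states. For $s=(\ell,\nu)$: $s\to_t s'$ if $s'=s+t$ is defined and $s+t'\in S$ for all $t'\in[0,t]$; $s\xrightarrow{a}s'$ if $s'=(\delta(\ell,a),\mathrm{Reset}(\nu,\rho(a)))$, $s,s'\in S$ and $s\in E(a)$. For $(a,t)\in A\times\mathbb R_{\ge0}$, $\mathrm{Succ}(s,(a,t))=(\delta(\ell,a),\mathrm{Reset}(\nu+t,\rho(a)))$. A reachability-time game is $\Gamma=(\mathcal T,L_{\mathrm{Min}},L_{\mathrm{Max}})$ with $(L_{\mathrm{Min}},L_{\mathrm{Max}})$ a partition of $L$; $S_{\mathrm{Min}}$, $S_{\mathrm{Max}}$, $\mathcal R_{\mathrm{Min}}$, $\mathcal R_{\mathrm{Max}}$ are the states/regions with location in $L_{\mathrm{Min}}$ resp. $L_{\mathrm{Max}}$. Region relations: $R\to_*R'$ if there are $s\in R,s'\in R'$, $t\ge 0$ with $s\to_t s'$; $R\to_{+1}R'$ ($R'$ is the time successor of $R$) if $R\to_*R'$, $R\ne R'$, and $R\to_*R''\to_*R'$ implies $R''\in\{R,R'\}$; $R\xrightarrow aR'$ if there are $s\in R,s'\in R'$ with $s\xrightarrow a s'$. $R$ is thin if for all $s\in R$ and $\varepsilon>0$, $[s+\varepsilon]\neq[s]$. For thin $R''$, $b\in\{0,\dots,k\}$,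 $c\in C$: $R\to_{b,c}R''$ if $R\to_*R''$ and $s+(b-s(c))\in R''$ for all $s\in R$. Simple timed actions: $\mathcal A=A\times\{0,\dots,k\}\times C$; for $\alpha=(a,b,c)$, $t(s,\alpha)=b-s(c)$ if $s(c)\le b$ and $0$ otherwise, and $\mathrm{Succ}(s,\alpha)=\mathrm{Succ}(s,(a,t(s,\alpha)))$. For $F$ defined on $\overline{R'}$: $F^\oplus_\alpha(s)=t(s,\alpha)+F(\mathrm{Succ}(s,\alpha))$ and $F^\boxplus_\alpha(s)=1+F(\mathrm{Succ}(s,\alpha))$. Timed region graph $\widehat\Gamma=(\mathcal R,\mathcal M)$: $(R,\alpha,R')\in\mathcal M$ with $\alpha=(a,b,c)$ iff (i) $R\to_{b,c}R''\xrightarrow aR'$ for some $R''$; or (ii) $R\in\mathcal R_{\mathrm{Min}}$ and $R\to_{b,c}R''\to_{+1}R'''\xrightarrow aR'$ for some $R'',R'''$; or (iii) $R\in\mathcal R_{\mathrm{Max}}$ and $R\to_{b,c}R''$, $R'''\to_{+1}R''$, $R'''\xrightarrow aR'$ for some $R'',R'''$. (For $(R,\alpha,R')\in\mathcal M$ and $s\in R$, $\mathrm{Succ}(s,\alpha)\in\overline{R'}$.) Regional functions: maps $T$ assigning to each region $R$ a function $T(R):\overline R\to\mathbb R\cup\{\infty\}$ (resp. $D(R):\overline R\to\mathbb N\cup\{\infty\}$); $\widetilde T(s)=T([s])(s)$. $T$ is regionally simple (regionally constant) if each $T(R)$ is simple (constant), where $F:X\to\mathbb R$ is simple if $F\equiv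 e$ for some $e\in\mathbb Z$ or $F(s)=e-s(c)$ for some $e\in\mathbb Z$, $c\in C$. Lexicographic order: $(x,y)\le^{\mathrm{lex}}(x',y')$ iff $x<x'$, or $x=x'$ and $y\le y'$. Strategies and subgraphs: for a graph $G=(\mathcal R,\mathcal M')$, $\mathcal M'\subseteq\mathcal M$, a positional strategy for Max is a map $\chi:S_{\mathrm{Max}}\to\mathcal M'$ with $\chi(s)$ of the form $([s],\alpha,R)$; similarly $\mu:S_{\mathrm{Min}}\to\mathcal M'$ for Min; $\Delta_{\mathrm{Max}},\Delta_{\mathrm{Min}}$ are these sets. A strategy is regionally constant if $[s]=[s']$ implies equal values (write $\chi(R)$). For regionally constant $\chi$, the strategy subgraph $G\upharpoonright\chi$ keeps all moves of $G$ out of $\mathcal R_{\mathrm{Min}}$ and, out of each $R\in\mathcal R_{\mathrm{Max}}$, only $\chi(R)$; $G\upharpoonright\mu$ is analogous. A region is choiceless in $G$ if it has a unique outgoing move; $G$ is 0-player if all regions are choiceless, 1-player if all Min regions or all Max regions are choiceless. For $s\in S$ let $M^*(s,(T,D))$ (resp. $M_*(s,(T,D))$) be the set of moves $m=([s],\alpha,R')$ of $G$ at which $(T(R')^\oplus_\alpha(s),D(R')^\boxplus_\alpha(s))$ is lexicographically maximal (resp. minimal). Fix a function $\mathrm{Choose}$ selecting an element of each nonempty set of moves. $\mathrm{Improve}_{\mathrm{Max}}(\chi,(T,D))(s)=\chi(s)$ if $\chi(s)\in M^*(s,(T,D))$, and $=\mathrm{Choose}(M^*(s,(T,D)))$ otherwise.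 Optimality equations for a graph $G$: $(T,D)\models\mathrm{Opt}_{\mathrm{Max}}(G)$ (resp. $\mathrm{Opt}_{\mathrm{Min}}(G)$) iff $(\widetilde T(s),\widetilde D(s))=(0,0)$ for $s\in F$ and, for all $s\in S\setminus F$, $(\widetilde T(s),\widetilde D(s))=\max^{\mathrm{lex}}$ (resp. $\min^{\mathrm{lex}}$) of $\{(T(R')^\oplus_\alpha(s),D(R')^\boxplus_\alpha(s)):([s],\alpha,R')\text{ a move of }G\}$. If $G$ is 0-player these coincide and are written $\mathrm{Opt}(G)$. *)

(* Defs.v *)
From Stdlib Require Import Reals ClassicalEpsilon List.
Open Scope R_scope.
Set Implicit Arguments.
Unset Strict Implicit.

Definition finite_type (X : Type) : Prop := exists l : list X, forall x, In x l.

Definition valid (k : nat) {C : Type} (nu : C -> R) : Prop :=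
  forall c, 0 <= nu c <= INR k.

Inductive cmp := CLt | CGt | CEq | CLe | CGe.

Definition rel (o : cmp) (x y : R) : Prop :=
  match o with
  | CLt => x < y | CGt => x > y | CEq => x = y | CLe => x <= y | CGe => x >= y
  end.

Inductive constr (C : Type) :=
  | Single (c : C) (o : cmp) (i : nat)
  | Diff (c c' : C) (o : cmp) (i : nat).

Definition simple (k : nat) {C : Type} (phi : constr C) : Prop :=
  match phi with Single _ _ i => (i <= k)%nat | Diff _ _ _ i => (i <= k)%nat end.

Definition sat {C : Type} (nu : C -> R) (phi : constr C) : Prop :=
  match phi with
  | Single c o i => rel o (nu c) (INR i)
  | Diff c c' o i => rel o (nu c - nu c') (INR i)
  end.

Definition clock_equiv (k : nat) {C : Type} (nu nu' : C -> R) : Prop :=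
  valid k nu /\ valid k nu' /\
  forall phi : constr C, simple k phi -> (sat nu phi <-> sat nu' phi).

Definition clock_zone (k : nat) {C : Type} (W : (C -> R) -> Prop) : Prop :=
  (forall nu, W nu -> valid k nu) /\
  (forall nu nu', W nu -> clock_equiv k nu nu' -> W nu') /\
  (forall nu nu' lam, W nu -> W nu' -> 0 <= lam <= 1 ->
      W (fun c => lam * nu c + (1 - lam) * nu' c)).

Definition config (L C : Type) : Type := (L * (C -> R))%type.

Definition inQ (k : nat) {L C : Type} (s : config L C) : Prop := valid k (snd s).

Definition delay {L C : Type} (s : config L C) (t : R) : config L C :=
  (fst s, fun c => snd s c + t).

Definition reset {C : Type} (nu : C -> R) (X : C -> bool) : C -> R :=
  fun c => if X c then 0 else nu c.

Definition reg (k : nat) {L C : Type} (s : config L C) : config L C -> Prop :=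
  fun s' => fst s' = fst s /\ clock_equiv k (snd s) (snd s').

Definition is_region (k : nat) {L C : Type} (Rg : config L C -> Prop) : Prop :=
  exists s, inQ k s /\ Rg = reg k s.

Definition zone (k : nat) {L C : Type} (Z : config L C -> Prop) : Prop :=
  forall l : L, clock_zone k (fun nu => Z (l, nu)).

Record TA (k : nat) (L C A : Type) := mkTA {
  ta_L_fin : finite_type L;
  ta_C_fin : finite_type C;
  ta_A_fin : finite_type A;
  ta_S : config L C -> Prop;
  ta_E : A -> config L C -> Prop;
  ta_delta : L -> A -> L;
  ta_rho : A -> C -> bool;          (* characteristic function of rho(a) ⊆ C *)
  ta_F : config L C -> Prop;
  ta_S_zone : zone k ta_S;
  ta_E_zone : forall a, zone k (ta_E a);
  ta_E_sub : forall a s, ta_E a s -> ta_S s;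
  ta_F_zone : zone k ta_F;
  ta_F_sub : forall s, ta_F s -> ta_S s
}.

(* (L_Min, L_Max) given by the characteristic function of L_Max *)
Record game (k : nat) (L C A : Type) := mkGame {
  g_ta : TA k L C A;
  g_isMax : L -> bool
}.

Section Game.
Context {k : nat} {L C A : Type} (g : game k L C A).

Let T := g_ta g.
Let SS := ta_S T.
Let Cfg := config L C.

Definition delay_step (s : Cfg) (t : R) (s' : Cfg) : Prop :=
  0 <= t /\ s' = delay s t /\ valid k (snd s') /\
  forall t', 0 <= t' <= t -> SS (delay s t').

Definition act_step (a : A) (s s' : Cfg) : Prop :=
  s' = (ta_delta T (fst s) a, reset (snd s) (ta_rho T a)) /\
  SS s /\ SS s' /\ ta_E T a s.

Definition succ (s : Cfg) (a : A) (t : R) : Cfg :=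
  (ta_delta T (fst s) a, reset (snd (delay s t)) (ta_rho T a)).

Definition reach_star (R1 R2 : Cfg -> Prop) : Prop :=
  exists s s' t, R1 s /\ R2 s' /\ delay_step s t s'.

Definition time_succ (R1 R2 : Cfg -> Prop) : Prop :=
  reach_star R1 R2 /\ R1 <> R2 /\
  forall R3, is_region k R3 -> reach_star R1 R3 -> reach_star R3 R2 ->
    R3 = R1 \/ R3 = R2.

Definition region_act (a : A) (R1 R2 : Cfg -> Prop) : Prop :=
  exists s s', R1 s /\ R2 s' /\ act_step a s s'.

Definition thin (Rg : Cfg -> Prop) : Prop :=
  forall s, Rg s -> forall eps, eps > 0 -> reg k (delay s eps) <> reg k s.

Definition reach_bc (b : nat) (c : C) (R1 R2 : Cfg -> Prop) : Prop :=
  thin R2 /\ reach_star R1 R2 /\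
  forall s, R1 s -> R2 (delay s (INR b - snd s c)).

Definition region_min (Rg : Cfg -> Prop) : Prop :=
  exists s, inQ k s /\ Rg = reg k s /\ g_isMax g (fst s) = false.
Definition region_max (Rg : Cfg -> Prop) : Prop :=
  exists s, inQ k s /\ Rg = reg k s /\ g_isMax g (fst s) = true.

Definition sta : Type := (A * nat * C)%type.

Definition tdel (al : sta) (s : Cfg) : R :=
  let '(_, b, c) := al in
  if Rle_dec (snd s c) (INR b) then INR b - snd s c else 0.

Definition succ_sta (s : Cfg) (al : sta) : Cfg :=
  let '(a, _, _) := al in succ s a (tdel al s).

Record move := mkMove { msrc : Cfg -> Prop; mact : sta; mdst : Cfg -> Prop }.

Definition inM (m : move) : Prop :=
  let '(a, b, c) := mact m in
  is_region k (msrc m) /\ is_region k (mdst m) /\ (b <= k)%nat /\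
  ( (exists R2, is_region k R2 /\ reach_bc b c (msrc m) R2 /\
                region_act a R2 (mdst m))
  \/ (region_min (msrc m) /\
      exists R2 R3, is_region k R2 /\ is_region k R3 /\
        reach_bc b c (msrc m) R2 /\ time_succ R2 R3 /\ region_act a R3 (mdst m))
  \/ (region_max (msrc m) /\
      exists R2 R3, is_region k R2 /\ is_region k R3 /\
        reach_bc b c (msrc m) R2 /\ time_succ R3 R2 /\ region_act a R3 (mdst m))).

(* a graph G = (R, M') with M' ⊆ M, given by its move set *)
Definition subgraph (G : move -> Prop) : Prop := forall m, G m -> inM m.

Definition choiceless (G : move -> Prop) (Rg : Cfg -> Prop) : Prop :=
  forall m1 m2, G m1 -> G m2 -> msrc m1 = Rg -> msrc m2 = Rg -> m1 = m2.

(** extended values: R ∪ {∞} and N ∪ {∞} (None = ∞) *)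
Inductive xreal := XR (r : R) | XInf.

Definition xlt (x y : xreal) : Prop :=
  match x, y with
  | XR a, XR b => a < b
  | XR _, XInf => True
  | XInf, _ => False
  end.

Definition nle (x y : option nat) : Prop :=
  match x, y with
  | Some a, Some b => (a <= b)%nat
  | _, None => True
  | None, Some _ => False
  end.

Definition lexle (p q : xreal * option nat) : Prop :=
  xlt (fst p) (fst q) \/ (fst p = fst q /\ nle (snd p) (snd q)).

Definition xadd (t : R) (x : xreal) : xreal :=
  match x with XR r => XR (t + r) | XInf => XInf end.

Definition nsucc (x : option nat) : option nat := option_map S x.

(* regional functions: T(R) and D(R), only meaningful on the closure of R *)
Definition rfunT : Type := (Cfg -> Prop) -> Cfg -> xreal.
Definition rfunD : Type := (Cfg -> Prop) -> Cfg -> option nat.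

Definition tilT (Tf : rfunT) (s : Cfg) : xreal := Tf (reg k s) s.
Definition tilD (Df : rfunD) (s : Cfg) : option nat := Df (reg k s) s.

Definition mval (Tf : rfunT) (Df : rfunD) (m : move) (s : Cfg) : xreal * option nat :=
  (xadd (tdel (mact m) s) (Tf (mdst m) (succ_sta s (mact m))),
   nsucc (Df (mdst m) (succ_sta s (mact m)))).

Definition is_lexmax (X : xreal * option nat -> Prop) (v : xreal * option nat) : Prop :=
  X v /\ forall w, X w -> lexle w v.
Definition is_lexmin (X : xreal * option nat -> Prop) (v : xreal * option nat) : Prop :=
  X v /\ forall w, X w -> lexle v w.

Definition move_vals (G : move -> Prop) Tf Df (s : Cfg) : xreal * option nat -> Prop :=
  fun v => exists m, G m /\ msrc m = reg k s /\ v = mval Tf Df m s.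

Definition OptMax (G : move -> Prop) (Tf : rfunT) (Df : rfunD) : Prop :=
  (forall s, ta_F T s -> tilT Tf s = XR 0 /\ tilD Df s = Some 0%nat) /\
  (forall s, SS s -> ~ ta_F T s ->
     is_lexmax (move_vals G Tf Df s) (tilT Tf s, tilD Df s)).

Definition OptMin (G : move -> Prop) (Tf : rfunT) (Df : rfunD) : Prop :=
  (forall s, ta_F T s -> tilT Tf s = XR 0 /\ tilD Df s = Some 0%nat) /\
  (forall s, SS s -> ~ ta_F T s ->
     is_lexmin (move_vals G Tf Df s) (tilT Tf s, tilD Df s)).

(* for a 0-player graph Opt_Max and Opt_Min coincide; Opt(G) := Opt_Max(G) *)
Definition Opt0 := OptMax.

Definition S_Max (s : Cfg) : Prop := SS s /\ g_isMax g (fst s) = true.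

Definition max_strategy (G : move -> Prop) (chi : Cfg -> move) : Prop :=
  forall s, S_Max s -> G (chi s) /\ msrc (chi s) = reg k s.

Definition regionally_constant_max (chi : Cfg -> move) : Prop :=
  forall s s', S_Max s -> S_Max s' -> reg k s = reg k s' -> chi s = chi s'.

Definition restrict_max (G : move -> Prop) (chi : Cfg -> move) : move -> Prop :=
  fun m => G m /\ (region_min (msrc m) \/ exists s, S_Max s /\ m = chi s).

Definition Mstar (G : move -> Prop) Tf Df (s : Cfg) : move -> Prop :=
  fun m => G m /\ msrc m = reg k s /\
    forall m', G m' -> msrc m' = reg k s -> lexle (mval Tf Df m' s) (mval Tf Df m s).

Definition choose_spec (choose : (move -> Prop) -> move) : Prop :=
  forall X : move -> Prop, (exists m, X m) -> X (choose X).

Definition ImproveMax (choose : (move -> Prop) -> move) (G : move -> Prop)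
    (chi : Cfg -> move) Tf Df : Cfg -> move :=
  fun s => if excluded_middle_informative (Mstar G Tf Df s (chi s))
           then chi s else choose (Mstar G Tf Df s).

End Game.

(* Main.v *)
Require Import Defs.
From Stdlib Require Import Reals List Classical ClassicalEpsilon FunctionalExtensionality PropExtensionality Lia Lra.
Import ListNotations.
Open Scope R_scope.

Lemma lexle_total (p q : xreal * option nat) : lexle p q \/ lexle q p.
Proof.
  destruct p as [[a|] x], q as [[b|] y]; unfold lexle; simpl.
  - destruct (total_order_T a b) as [[H|H]|H].
    + left; left; exact H.
    + subst. destruct x as [x|], y as [y|]; simpl.
      * destruct (Nat.le_ge_cases x y); [left|right]; right; auto.
      * left; right; auto.
      * right; right; auto.
      * left; right; auto.
    + right; left; exact H.
  - left; left; exact I.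
  - right; left; exact I.
  - destruct x as [x|], y as [y|]; simpl.
      * destruct (Nat.le_ge_cases x y); [left|right]; right; auto.
      * left; right; auto.
      * right; right; auto.
      * left; right; auto.
Qed.

Lemma lexle_trans p q r : lexle p q -> lexle q r -> lexle p r.
Proof.
  destruct p as [[a|] x], q as [[b|] y], r as [[c|] z]; unfold lexle; simpl;
  intros H1 H2; try tauto;
  repeat match goal with
  | H : _ \/ _ |- _ => destruct H
  | H : _ /\ _ |- _ => destruct H
  | H : XR _ = XR _ |- _ => injection H; clear H; intro; subst
  | H : XInf = XR _ |- _ => discriminate
  | H : XR _ = XInf |- _ => discriminate
  end; try (left; lra); try tauto;
  right; split; auto;
  destruct x, y, z; simpl in *; try tauto; lia.
Qed.

Lemma lexle_refl p : lexle p p.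
Proof. destruct (lexle_total p p); auto. Qed.

Lemma max_of_finite (V : xreal * option nat -> Prop) (l : list (xreal * option nat)) :
  (forall v, V v -> In v l) -> (exists v, V v) ->
  exists v, V v /\ forall w, V w -> lexle w v.
Proof.
  intros Hc Hne.
  assert (Hgen : forall l, (exists v, V v /\ In v l) ->
     exists v, V v /\ In v l /\ forall w, V w -> In w l -> lexle w v).
  { clear. intro l0. induction l0 as [|a l IH]; intros [v [Hv Hi]]; [destruct Hi|].
    destruct (classic (exists v, V v /\ In v l)) as [He|Hn].
    - destruct (IH He) as [m [Hm [Hmi Hmax]]].
      destruct (classic (V a)) as [Ha|Ha].
      + destruct (lexle_total a m) as [Ham|Hma].
        * exists m; repeat split; auto; [right; auto|].
          intros w Hw [<-|Hw']; auto.
        * exists a; repeat split; auto; [left; auto|].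
          intros w Hw [<-|Hw']; [apply lexle_refl|eapply lexle_trans; eauto].
      + exists m; repeat split; auto; [right; auto|].
        intros w Hw [<-|Hw']; [contradiction|auto].
    - destruct Hi as [<-|Hi]; [|exfalso; apply Hn; eauto].
      exists a; repeat split; auto; [left; auto|].
      intros w Hw [<-|Hw']; [apply lexle_refl|exfalso; apply Hn; eauto]. }
  destruct Hne as [v Hv].
  destruct (Hgen l) as [m [Hm [_ Hmax]]]; eauto.
Qed.

Lemma cover_image {X K Y : Type} (P : X -> Prop) (key : X -> K) (f : X -> Y) (lk : list K) :
  (forall x, P x -> In (key x) lk) ->
  (forall x y, P x -> P y -> key x = key y -> f x = f y) ->
  exists ly, forall x, P x -> In (f x) ly.
Proof.
  intros Hk Hf.
  assert (H : forall lk, exists ly, forall x, P x -> In (key x) lk -> In (f x) ly).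
  { clear Hk. induction lk0 as [|a l IH].
    - exists nil; intros x _ [].
    - destruct IH as [ly Hly].
      destruct (classic (exists x0, P x0 /\ key x0 = a)) as [[x0 [Px0 Hx0]]|Hn].
      + exists (f x0 :: ly). intros x Px [Ha|Hi].
        * left. apply Hf; congruence.
        * right; auto.
      + exists ly. intros x Px [Ha|Hi]; auto. exfalso; eauto. }
  destruct (H lk) as [ly Hly]. exists ly; auto.
Qed.

Fixpoint allbools (n : nat) : list (list bool) :=
  match n with 0 => [[]] | S n => map (cons true) (allbools n) ++ map (cons false) (allbools n) end.

Lemma allbools_in (l : list bool) : In l (allbools (length l)).
Proof.
  induction l as [|b l IH]; simpl; auto.
  apply in_or_app. destruct b; [left|right]; apply in_map; auto.
Qed.

Lemma map_eq_in {X Y} (f g : X -> Y) l x : map f l = map g l -> In x l -> f x = g x.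
Proof.
  induction l; simpl; intros H Hi; [destruct Hi|]. injection H; intros.
  destruct Hi as [<-|Hi]; auto.
Qed.

Definition cmps := [CLt; CGt; CEq; CLe; CGe].

Definition lsimple {C : Type} (k : nat) (lc : list C) : list (constr C) :=
  flat_map (fun c => flat_map (fun o => map (fun i => Single c o i) (seq 0 (S k))) cmps) lc ++
  flat_map (fun c => flat_map (fun c' => flat_map (fun o => map (fun i => Diff c c' o i) (seq 0 (S k))) cmps) lc) lc.

Lemma lsimple_in {C : Type} k (lc : list C) phi :
  (forall c, In c lc) -> simple k phi -> In phi (lsimple k lc).
Proof.
  intros Hc Hs. unfold lsimple. apply in_or_app.
  assert (Ho : forall o, In o cmps) by (destruct o; simpl; tauto).
  destruct phi as [c o i|c c' o i]; simpl in Hs; [left|right];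
  repeat (apply in_flat_map; eexists; split; [apply Hc || apply Ho|]);
  apply in_map_iff; exists i; split; auto; apply in_seq; lia.
Qed.

Definition bsat {C : Type} (nu : C -> R) (phi : constr C) : bool :=
  if excluded_middle_informative (sat nu phi) then true else false.

Lemma regions_finite (k : nat) (L C : Type) :
  finite_type L -> finite_type C ->
  exists lr, forall s : config L C, inQ k s -> In (reg k s) lr.
Proof.
  intros [ll Hl] [lc Hc].
  set (ls := lsimple k lc).
  apply (cover_image (inQ k) (fun s : config L C => (fst s, map (bsat (snd s)) ls)) (reg k)
           (list_prod ll (allbools (length ls)))).
  - intros s _. apply in_prod; auto.
    rewrite <- (length_map (bsat (snd s)) ls). apply allbools_in.
  - intros s1 s2 H1 H2 Heq. injection Heq as Hf Hm.
    assert (Hsat : forall phi, simple k phi -> (sat (snd s1) phi <-> sat (snd s2) phi)).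
    { intros phi Hp. pose proof (map_eq_in _ _ _ phi Hm (lsimple_in k lc phi Hc Hp)) as E.
      unfold bsat in E.
      destruct (excluded_middle_informative (sat (snd s1) phi)),
               (excluded_middle_informative (sat (snd s2) phi)); try discriminate; tauto. }
    extensionality x. apply propositional_extensionality.
    unfold reg, clock_equiv, inQ in *. rewrite Hf.
    split; intros [Hx [Hv1 [Hv2 Hs]]]; (split; [exact Hx|split; [auto|split; [auto|]]]);
      intros phi Hp; specialize (Hs phi Hp); specialize (Hsat phi Hp); tauto.
Qed.

Lemma inM_info (k : nat) (L C A : Type) (g : game k L C A) m :
  inM g m -> is_region k (mdst m) /\ exists a b c, mact m = (a, b, c) /\ (b <= k)%nat.
Proof.
  unfold inM. destruct (mact m) as [[a b] c]. intros [_ [H1 [H2 _]]].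
  split; auto. exists a, b, c; auto.
Qed.

Lemma SS_inQ (k : nat) (L C A : Type) (g : game k L C A) s :
  ta_S (g_ta g) s -> inQ k s.
Proof.
  destruct s as [l nu]. intros H. exact (proj1 (ta_S_zone (g_ta g) l) nu H).
Qed.

Lemma reg_self (k : nat) (L C : Type) (s : config L C) : inQ k s -> reg k s s.
Proof.
  intros H. split; auto. split; auto. split; auto. tauto.
Qed.

Lemma exists_max (k : nat) (L C A : Type) (g : game k L C A) (G : move -> Prop) Tf Df s m :
  subgraph g G -> G m -> msrc m = reg k s ->
  exists m0, Mstar g G Tf Df s m0.
Proof.
  intros Hsub HGm Hsrc.
  destruct (regions_finite k L C (ta_L_fin (g_ta g)) (ta_C_fin (g_ta g))) as [lr Hlr].
  destruct (ta_A_fin (g_ta g)) as [la Hla]. destruct (ta_C_fin (g_ta g)) as [lc Hlc].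
  set (lact := list_prod (list_prod la (seq 0 (S k))) lc).
  set (lv := flat_map (fun al => map (fun R' => mval g Tf Df (mkMove (reg k s) al R') s) lr) lact).
  destruct (max_of_finite (move_vals g G Tf Df s) lv) as [v [[m0 [HG0 [Hs0 ->]]] Hmax]].
  - intros v [m' [HG' [Hs' ->]]].
    destruct (inM_info k L C A g m' (Hsub m' HG')) as [[s' [Hq' Hd]] [a [b [c [Ha Hb]]]]].
    apply in_flat_map. exists (mact m'). split.
    + rewrite Ha. apply in_prod; [apply in_prod|]; auto. apply in_seq; lia.
    + apply in_map_iff. exists (mdst m'). split; [destruct m'; reflexivity|].
      rewrite Hd. auto.
  - exists (mval g Tf Df m s), m; auto.
  - exists m0. split; auto. split; auto. intros m' HG' Hs'. apply Hmax.
    exists m'; auto.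
Qed.

Theorem mainTheorem11 (k : nat) (L C A : Type) (g : game k L C A)
  (G : @move L C A -> Prop)
  (choose : (@move L C A -> Prop) -> @move L C A)
  (chi : config L C -> @move L C A)
  (Tchi : @rfunT L C) (Dchi : @rfunD L C) :
  subgraph g G ->
  (forall Rg, region_min g Rg -> choiceless G Rg) ->
  choose_spec choose ->
  max_strategy g G chi ->
  regionally_constant_max g chi ->
  Opt0 g (restrict_max g G chi) Tchi Dchi ->
  (forall s, S_Max g s -> ImproveMax g choose G chi Tchi Dchi s = chi s) ->
  OptMax g G Tchi Dchi.
Proof.
  intros Hsub Hchl Hch Hstr Hrc [HF Hopt] Himp.
  split; [exact HF|]. intros s Hs HnF.
  pose proof (SS_inQ k L C A g s Hs) as HQ.
  destruct (Hopt s Hs HnF) as [[m [[HGm Hrm] [Hsrc Hv]]] Hup].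
  destruct (g_isMax g (fst s)) eqn:Hmx.
  -
    assert (HSM : S_Max g s) by (split; auto).
    assert (Hm : m = chi s).
    { destruct Hrm as [[s0 [Hq0 [Heq Hmn]]]|[s' [HS' ->]]].
      - exfalso. rewrite Hsrc in Heq.
        assert (Hr : reg k s s0) by (rewrite Heq; apply reg_self; auto).
        destruct Hr as [Hf _]. rewrite Hf in Hmn. congruence.
      - apply Hrc; auto. destruct (Hstr s' HS') as [_ E]. congruence. }
    subst m.
    assert (HMs : Mstar g G Tchi Dchi s (chi s)).
    { specialize (Himp s HSM). unfold ImproveMax in Himp.
      destruct (excluded_middle_informative (Mstar g G Tchi Dchi s (chi s))) as [H|H]; auto.
      rewrite <- Himp. apply Hch. eapply exists_max; eauto. }
    split.
    + exists (chi s); auto.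
    + intros w [m' [HG' [Hs' ->]]]. rewrite Hv. destruct HMs as [_ [_ HM]]. apply HM; auto.
  -
    split.
    + exists m; auto.
    + intros w [m' [HG' [Hs' ->]]]. apply Hup. exists m'. split; auto. split; auto.
      left. rewrite Hs'. exists s; auto.
Qed.
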